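(* Let $X\subset\mathbb{R}$, let $\delta>0$ and let $f,g\in C_u(X)$ with $g>0$ and $\|g\|_\infty\le\delta$. Then $N_\delta(\mathrm{graph}(f+g))\ge\frac12 N_\delta(\mathrm{graph}(f))$.
   Context: $C_u(X)$ is the set of uniformly continuous real functions on $X$, $\|\cdot\|_\infty$ is the sup norm on $X$, and $\mathrm{graph}(h)=\{(x,h(x)):x\in X\}$. For $F\subset\mathbb{R}^2$, $N_\delta(F)$ is the number of boxes $B_i^j=[i\delta,(i+1)\delta)\times[j\delta,(j+1)\delta)$ ($i,j\in\mathbb{Z}$) of the disjoint $\delta$-mesh that intersect $F$. *)

(* Defs.v *)
From HB Require Import structures.
From mathcomp Require Import all_boot all_order all_algebra.
From mathcomp Require Import all_classical all_reals all_analysis.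
Set Implicit Arguments. Unset Strict Implicit. Unset Printing Implicit Defensive.
Import Order.TTheory GRing.Theory Num.Theory.
Local Open Scope classical_set_scope.
Local Open Scope ring_scope.

Definition unif_cont_on (R : realType) (X : set R) (h : R -> R) : Prop :=
  forall e : R, 0 < e -> exists d : R, 0 < d /\
    forall x y, X x -> X y -> `|x - y| < d -> `|h x - h y| < e.

Definition graph (R : realType) (X : set R) (h : R -> R) : set (R * R) :=
  [set p | exists2 x, X x & p = (x, h x)].

Definition box (R : realType) (d : R) (ij : int * int) : set (R * R) :=
  [set p | ij.1%:~R * d <= p.1 < (ij.1 + 1)%:~R * d /\
           ij.2%:~R * d <= p.2 < (ij.2 + 1)%:~R * d].

(* N_d(F): number of mesh boxes meeting F, as an extended real (may be +oo). *)
Definition Ndelta (R : realType) (d : R) (F : set (R * R)) : \bar R :=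
  (\esum_(ij in [set ij : int * int | box d ij `&` F !=set0]) 1)%E.

(* Main.v *)
Require Import Defs.
From HB Require Import structures.
From mathcomp Require Import all_boot all_order all_algebra.
From mathcomp Require Import all_classical all_reals all_analysis.
From mathcomp Require Import lra.
Import Order.TTheory GRing.Theory Num.Theory.
Local Open Scope classical_set_scope.
Local Open Scope ring_scope.

Lemma esum_sub_union (R : realType) (T : choiceType) (A B C : set T) :
  A `<=` B `|` C ->
  (\esum_(i in A) (1 : \bar R) <= \esum_(i in B) 1 + \esum_(i in C) 1)%E.
Proof.
move=> sub.
rewrite esum_mkcond (esum_mkcond B) (esum_mkcond C) -esumD; last 2 first.
- by move=> i _; case: ifP.
- by move=> i _; case: ifP.
apply: le_esum => i _.
case: ifPn => [/set_mem /sub [Bi|Ci]|_].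
- rewrite (mem_set Bi) leeDl //; by case: ifP.
- rewrite (mem_set Ci) leeDr //; by case: ifP.
- by rewrite adde_ge0 //; case: ifP.
Qed.

Theorem lemma2 (R : realType) (X : set R) (delta : R) (f g : R -> R) :
  0 < delta ->
  unif_cont_on X f -> unif_cont_on X g ->
  (forall x, X x -> 0 < g x) ->
  (forall x, X x -> `|g x| <= delta) ->
  (Ndelta delta (graph X (fun x => f x + g x)%R) >= 2^-1%:E * Ndelta delta (graph X f))%E.
Proof.
move=> d0 _ _ gpos gle.
set A := [set ij : int * int | box delta ij `&` graph X f !=set0].
set B := [set ij : int * int | box delta ij `&` graph X (fun x => f x + g x) !=set0].
set s := fun ij : int * int => (ij.1, ij.2 - 1)%R.
have sinj : set_inj B s.
  by move=> [a b] [c e] _ _ [-> /eqP]; rewrite subr_eq subrK => /eqP ->.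
have AB : A `<=` B `|` s @` B.
  move=> [i j] [p [[/= h1 h2] [x Xx pe]]]; subst p.
  move: h1 h2 => /= /andP[xl xu] /andP[fl fu].
  have g0 := gpos x Xx; have gd : g x <= delta by have := gle x Xx; rewrite ger0_norm // ltW.
  have [lt|ge] := ltP (f x + g x) ((j + 1)%:~R * delta).
    left; exists (x, f x + g x); split; last by exists x.
    split => /=; first by rewrite xl xu.
    by rewrite lt andbT (le_trans fl) // lerDl ltW.
  right; exists (i, j + 1); last by rewrite /s /= addrK.
  exists (x, f x + g x); split; last by exists x.
  split => /=; first by rewrite xl xu.
  move: fu; rewrite !intrD !mulrDl !mul1r => fu; lra.
have key := (@esum_sub_union R _ _ _ _ AB).
rewrite esum_image // in key.
rewrite /Ndelta -/A -/B.
move: key; set NA := (\esum_(i in A) _)%E; set NB := (\esum_(i in B) _)%E.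
have NA0 : (0 <= NA)%E by apply: esum_ge0.
have NB0 : (0 <= NB)%E by apply: esum_ge0.
clearbody NA NB.
move: NA0 NB0; case: NB => [r| |//]; last by move=> *; rewrite leey.
case: NA => [a| |//] ? ?; last by rewrite -EFinD leye_eq.
rewrite -EFinD -EFinM !lee_fin => h.
by rewrite mulrC ler_pdivrMr // mulr_natr mulr2n.
Qed.
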